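(* Let $K$ be an algebraically closed field of characteristic $0$, let $\mathcal{L}$ be a line of type $(1,1,0)$ in $\mathbb{P}^1\times\mathbb{P}^1\times\mathbb{P}^1$ over $K$, and let $X$ be a finite set of distinct points with $X\subseteq\mathcal{L}$ and $|X|=s$. Then $H_X(i,j,k)=\min\{k+1,s\}$ for all $(i,j,k)\in\mathbb{N}^3$.
   Context: Let $R=K[x_0,x_1,y_0,y_1,z_0,z_1]$ be $\mathbb{N}^3$-graded with $\deg x_i=(1,0,0)$, $\deg y_i=(0,1,0)$, $\deg z_i=(0,0,1)$. For a point $P=[a_0:a_1]\times[b_0:b_1]\times[c_0:c_1]$, $I(P)=(a_1x_0-a_0x_1,\,b_1y_0-b_0y_1,\,c_1z_0-c_0z_1)$, and for $X=\{P_1,\dots,P_s\}$, $I(X)=\bigcap_i I(P_i)$. The Hilbert function is $H_X(i,j,k)=\dim_K R_{i,j,k}-\dim_K I(X)_{i,j,k}$. A line of type $(1,1,0)$ is the subvariety defined by an ideal $(L,L')$ with $L\in R_{1,0,0}$, $L'\in R_{0,1,0}$ nonzero. *)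

(* Defs.v *)
From HB Require Import structures.
From mathcomp Require Import all_boot all_order all_algebra.
From mathcomp Require Import mpoly.
From Stdlib Require Import ClassicalEpsilon.

Set Implicit Arguments.
Unset Strict Implicit.
Unset Printing Implicit Defensive.

Import GRing.Theory.
Local Open Scope ring_scope.

Definition is_basis (K : fieldType) (V : lmodType K) (S : V -> Prop)
    (n : nat) (vs : n.-tuple V) : Prop :=
  [/\ (forall i : 'I_n, S (tnth vs i)),
      (forall c : 'I_n -> K, \sum_(i < n) c i *: tnth vs i = 0 ->
          forall i, c i = 0) &
      (forall v, S v -> exists c : 'I_n -> K, v = \sum_(i < n) c i *: tnth vs i)].

Definition has_dim (K : fieldType) (V : lmodType K) (S : V -> Prop) (n : nat) :
  Prop := exists vs : n.-tuple V, is_basis S vs.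

(* dim_K S : the dimension of S (meaningful when S is finite-dimensional). *)
Definition dimK (K : fieldType) (V : lmodType K) (S : V -> Prop) : nat :=
  epsilon (inhabits 0%N) (fun n => has_dim S n).

Definition R6 (K : fieldType) := {mpoly K[6]}.

Definition vx0 (K : fieldType) : R6 K := 'X_(inord 0).
Definition vx1 (K : fieldType) : R6 K := 'X_(inord 1).
Definition vy0 (K : fieldType) : R6 K := 'X_(inord 2).
Definition vy1 (K : fieldType) : R6 K := 'X_(inord 3).
Definition vz0 (K : fieldType) : R6 K := 'X_(inord 4).
Definition vz1 (K : fieldType) : R6 K := 'X_(inord 5).

Definition tdeg (m : 'X_{1..6}) : nat * nat * nat :=
  ((m (inord 0) + m (inord 1))%N, (m (inord 2) + m (inord 3))%N,
   (m (inord 4) + m (inord 5))%N).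

Definition Rdeg (K : fieldType) (i j k : nat) : R6 K -> Prop :=
  fun p => all (fun m => tdeg m == (i, j, k)) (msupp p).

(* Points of P^1 x P^1 x P^1, given by homogeneous coordinates               *)

Definition P1pt (K : fieldType) := (K * K)%type.
Definition P111pt (K : fieldType) := (P1pt K * P1pt K * P1pt K)%type.

Definition P1_valid (K : fieldType) (a : P1pt K) : bool := (a.1 != 0) || (a.2 != 0).
Definition pt_valid (K : fieldType) (P : P111pt K) : bool :=
  [&& P1_valid P.1.1, P1_valid P.1.2 & P1_valid P.2].

Definition P1_eq (K : fieldType) (a b : P1pt K) : bool := a.1 * b.2 == a.2 * b.1.
Definition pt_eq (K : fieldType) (P Q : P111pt K) : bool :=
  [&& P1_eq P.1.1 Q.1.1, P1_eq P.1.2 Q.1.2 & P1_eq P.2 Q.2].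

Fixpoint pts_distinct (K : fieldType) (X : seq (P111pt K)) : bool :=
  if X is P :: X' then all (fun Q => ~~ pt_eq P Q) X' && pts_distinct X' else true.

Definition gensP (K : fieldType) (P : P111pt K) : R6 K * R6 K * R6 K :=
  let: (a, b, c) := P in
  (a.2 *: vx0 K - a.1 *: vx1 K, b.2 *: vy0 K - b.1 *: vy1 K,
   c.2 *: vz0 K - c.1 *: vz1 K).

Definition in_ideal3 (K : fieldType) (g : R6 K * R6 K * R6 K) (p : R6 K) : Prop :=
  exists h1 h2 h3 : R6 K, p = h1 * g.1.1 + h2 * g.1.2 + h3 * g.2.

Definition in_IP (K : fieldType) (P : P111pt K) (p : R6 K) : Prop :=
  in_ideal3 (gensP P) p.

Definition in_IX (K : fieldType) (X : seq (P111pt K)) (p : R6 K) : Prop :=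
  forall P, P \in X -> in_IP P p.

Definition IXdeg (K : fieldType) (X : seq (P111pt K)) (i j k : nat) : R6 K -> Prop :=
  fun p => Rdeg i j k p /\ in_IX X p.

Definition HX (K : fieldType) (X : seq (P111pt K)) (i j k : nat) : nat :=
  (dimK (Rdeg (K:=K) i j k) - dimK (IXdeg X i j k))%N.

(* Lines of type (1,1,0): V(L, L') with L = l0 x0 + l1 x1, L' = m0 y0 + m1 y1 *)

Definition on_line110 (K : fieldType) (l m : K * K) (P : P111pt K) : bool :=
  (l.1 * P.1.1.1 + l.2 * P.1.1.2 == 0) && (m.1 * P.1.2.1 + m.2 * P.1.2.2 == 0).

(* Main.v *)
Require Import Defs.
From HB Require Import structures.
From mathcomp Require Import all_boot all_order all_algebra.
From mathcomp Require Import mpoly.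
From mathcomp Require Import ring.
From Stdlib Require Import ClassicalEpsilon.
Set Implicit Arguments.
Unset Strict Implicit.
Unset Printing Implicit Defensive.
Import GRing.Theory.
Local Open Scope ring_scope.


Section LinAlg.
Variables (K : fieldType) (V : lmodType K).

Definition comb n (vs : n.-tuple V) (c : 'I_n -> K) : V :=
  \sum_(a < n) c a *: tnth vs a.

Lemma indep_eq n (vs : n.-tuple V) (c d : 'I_n -> K) :
  (forall c : 'I_n -> K, \sum_(i < n) c i *: tnth vs i = 0 -> forall i, c i = 0) ->
  comb vs c = comb vs d -> forall a, c a = d a.
Proof.
move=> hind heq a; apply/eqP; rewrite -subr_eq0; apply/eqP.
apply: (hind (fun a => c a - d a)) => //.
under eq_bigr do rewrite scalerBl.
by rewrite sumrB -/(comb vs c) -/(comb vs d) heq subrr.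
Qed.

Lemma dim_unique (S : V -> Prop) n1 n2 : has_dim S n1 -> has_dim S n2 -> n1 = n2.
Proof.
suff H : forall n1 n2, has_dim S n1 -> has_dim S n2 -> (n2 <= n1)%N.
  by move=> h1 h2; apply/eqP; rewrite eqn_leq !H.
move=> {}n1 {}n2 [vs [vS vind vsp]] [ws [wS wind wsp]].
have [A hA] : exists A : 'I_n2 -> 'I_n1 -> K, forall b, tnth ws b = comb vs (A b).
  apply: (@fin_all_exists _ (fun _ => 'I_n1 -> K) (fun b c => tnth ws b = comb vs c)) => b.
  have [c hc] := vsp _ (wS b); by exists c.
have [B hB] : exists B : 'I_n1 -> 'I_n2 -> K, forall a, tnth vs a = comb ws (B a).
  apply: (@fin_all_exists _ (fun _ => 'I_n2 -> K) (fun a c => tnth vs a = comb ws c)) => a.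
  have [c hc] := wsp _ (vS a); by exists c.
pose AM := \matrix_(b < n2, a < n1) A b a.
pose BM := \matrix_(a < n1, c < n2) B a c.
have e : AM *m BM = 1%:M.
  apply/matrixP => b c; rewrite !mxE.
  have := @indep_eq _ ws (fun c => \sum_a AM b a * BM a c) (fun c => (b == c)%:R) wind.
  apply.
  rewrite /comb [RHS](bigD1 b) //=; rewrite eqxx scale1r [X in _ + X]big1 ?addr0; last first.
    by move=> i hi; rewrite eq_sym (negbTE hi) scale0r.
  rewrite hA /comb.
  under [RHS]eq_bigr do rewrite hB /comb scaler_sumr.
  rewrite [RHS]exchange_big /=; apply: eq_bigr => i _.
  rewrite scaler_suml; apply: eq_bigr => j _.
  by rewrite !mxE scalerA.
have := mxrankM_maxl AM BM; rewrite e mxrank1 => h.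
exact: leq_trans h (rank_leq_col _).
Qed.

Lemma dimK_eq (S : V -> Prop) n : has_dim S n -> dimK S = n.
Proof.
move=> h; apply: (@dim_unique S) => //.
by apply: epsilon_spec; exists n.
Qed.

Variables (s : nat) (f : V -> 'rV[K]_s).
Hypothesis f0 : f 0 = 0.
Hypothesis flin : forall a u v, f (a *: u + v) = a *: f u + f v.

Lemma f_sum I (r : seq I) (P : pred I) (c : I -> K) (F : I -> V) :
  f (\sum_(i <- r | P i) c i *: F i) = \sum_(i <- r | P i) c i *: f (F i).
Proof.
by elim/big_rec2: _ => // i y1 y2 _ <-; rewrite flin.
Qed.

Variables (S T : V -> Prop) (n : nat) (vs : n.-tuple V).
Hypothesis hb : is_basis S vs.
Hypothesis hS : forall c, S (comb vs c).
Hypothesis hT : forall v, T v <-> S v /\ f v = 0.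

Definition fM : 'M[K]_(n, s) := \matrix_(a < n) f (tnth vs a).

Lemma f_comb c : f (comb vs c) = (\row_a c a) *m fM.
Proof.
rewrite /comb f_sum mulmx_sum_row; apply: eq_bigr => a _.
by rewrite !mxE rowK.
Qed.

Lemma f_sub v : S v -> (f v <= fM)%MS.
Proof.
case: hb => _ _ hsp /hsp [c ->]; rewrite f_comb; exact: submxMl.
Qed.

Lemma ker_dim : has_dim T (n - \rank fM)%N.
Proof.
rewrite -mxrank_ker.
set RB := row_base (kermx fM).
case: hb => vS vind vsp.
exists (mktuple (fun b => comb vs (fun a => RB b a))).
split.
- move=> b; rewrite tnth_mktuple; apply/hT; split => //.
  rewrite f_comb; apply/sub_kermxP.
  have -> : \row_a RB b a = row b RB by apply/rowP => a; rewrite !mxE.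
  apply: submx_trans (row_sub b RB) _.
  by rewrite eq_row_base.
- move=> d hd.
  have hz : (\row_b d b) *m RB = 0.
    apply/rowP => a; rewrite [RHS]mxE.
    have := @indep_eq _ vs (fun a => ((\row_b d b) *m RB) 0 a) (fun _ => 0) vind.
    apply.
    rewrite /comb [RHS]big1; last by move=> *; rewrite scale0r.
    rewrite -[RHS]hd.
    under [RHS]eq_bigr do rewrite tnth_mktuple /comb scaler_sumr.
    rewrite exchange_big /=; apply: eq_bigr => i _.
    rewrite !mxE scaler_suml; apply: eq_bigr => j _.
    by rewrite !mxE scalerA.
  move=> b.
  have := row_free_inj (row_base_free (kermx fM)).
  move=> /(_ 1%N (\row_b d b) 0); rewrite mul0mx => /(_ hz) /rowP /(_ b).
  by rewrite !mxE.
- move=> v /hT [/vsp [c ->] hf].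
  move: hf; rewrite f_comb => /sub_kermxP.
  rewrite -(eq_row_base (kermx fM)) -/RB => /submxP [D hD].
  exists (fun b => D 0 b).
  rewrite /comb.
  under [RHS]eq_bigr do rewrite tnth_mktuple /comb scaler_sumr.
  rewrite exchange_big /=; apply: eq_bigr => i _.
  have := congr1 (fun M : 'rV_n => M 0 i) hD; rewrite /= !mxE => ->.
  rewrite scaler_suml; apply: eq_bigr => j _.
  by rewrite scalerA.
Qed.

End LinAlg.


Lemma pair_ring (Rg : comPzRingType) (u v a b : Rg) e1 e2 :
  exists h, b^+(e1+e2) * (u^+e1 * v^+e2) - (a^+e1 * b^+e2) * v^+(e1+e2) = h * (b*u - a*v).
Proof.
set S := \sum_(i < e1) (b*u) ^+ (e1.-1 - i) * (a*v) ^+ i.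
exists (b^+e2 * v^+e2 * S).
have -> : b ^+ e2 * v ^+ e2 * S * (b * u - a * v) = b ^+ e2 * v ^+ e2 * ((b * u - a * v) * S) by ring.
rewrite -subrXX !exprD !exprMn.
ring.
Qed.

Lemma pair_ring0 (Rg : comPzRingType) (u v a : Rg) e1 e2 :
  exists h, a^+(e1+e2) * (u^+e1 * v^+e2) - (a^+e1 * 0^+e2) * u^+(e1+e2) = h * (0*u - a*v).
Proof.
case: e2 => [|e].
  by exists 0; rewrite !expr0 !addn0 !mulr1 subrr mul0r.
exists (- (a^+(e1+e) * u^+e1 * v^+e)).
rewrite expr0n /= mulr0 mul0r subr0 mul0r sub0r mulrNN addnS !exprS !exprD.
ring.
Qed.

Section MP.
Variable K : fieldType.
Notation R := (R6 K).

Lemma prod6 (Rg : comPzRingType) (F : 'I_6 -> Rg) :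
  \prod_(i < 6) F i = F (inord 0) * F (inord 1) * F (inord 2) * F (inord 3) * F (inord 4) * F (inord 5).
Proof.
rewrite !big_ord_recr big_ord0 /= mul1r.
by congr (_ * _ * _ * _ * _ * _); congr F; apply/val_inj; rewrite /= inordK.
Qed.

Lemma X6 (m : 'X_{1..6}) : 'X_[m] = vx0 K ^+ m (inord 0) * vx1 K ^+ m (inord 1) *
  vy0 K ^+ m (inord 2) * vy1 K ^+ m (inord 3) * vz0 K ^+ m (inord 4) * vz1 K ^+ m (inord 5).
Proof. by rewrite mpolyXE_id prod6. Qed.

Definition cv (P : P111pt K) : 'I_6 -> K :=
  fun i => nth 0 [:: P.1.1.1; P.1.1.2; P.1.2.1; P.1.2.2; P.2.1; P.2.2] i.

Lemma meval6 (P : P111pt K) (m : 'X_{1..6}) : ('X_[m] : R).@[cv P] =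
  P.1.1.1 ^+ m (inord 0) * P.1.1.2 ^+ m (inord 1) * P.1.2.1 ^+ m (inord 2) *
  P.1.2.2 ^+ m (inord 3) * P.2.1 ^+ m (inord 4) * P.2.2 ^+ m (inord 5).
Proof. by rewrite mevalX prod6 /cv !inordK. Qed.

Lemma meval_vars (P : P111pt K) :
  (vx0 K).@[cv P] = P.1.1.1 /\ (vx1 K).@[cv P] = P.1.1.2 /\ (vy0 K).@[cv P] = P.1.2.1 /\
      (vy1 K).@[cv P] = P.1.2.2 /\ (vz0 K).@[cv P] = P.2.1 /\ (vz1 K).@[cv P] = P.2.2.
Proof. by rewrite /vx0 /vx1 /vy0 /vy1 /vz0 /vz1 !mevalXU /cv !inordK. Qed.

Lemma ideal_van (P : P111pt K) p : in_IP P p -> p.@[cv P] = 0.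
Proof.
case=> h1 [h2 [h3 ->]].
case: (meval_vars P) => e1 [e2 [e3 [e4 [e5 e6]]]].
case: P e1 e2 e3 e4 e5 e6 => [[a b] c] /= e1 e2 e3 e4 e5 e6.
rewrite !mevalD !mevalM !mevalB !mevalZ e1 e2 e3 e4 e5 e6.
by rewrite ![_.2 * _.1]mulrC !subrr !mulr0 !addr0.
Qed.

Lemma scalE (c : K) (p : R) : c *: p = c%:MP * p.
Proof. by rewrite mul_mpolyC. Qed.

Section Ideal.
Variable g : R * R * R.
Notation I := (in_ideal3 g).
Lemma I0 : I 0. Proof. by exists 0, 0, 0; rewrite !mul0r !addr0. Qed.
Lemma ID p q : I p -> I q -> I (p + q).
Proof.
case=> [a [b [c ->]]] [a' [b' [c' ->]]]; exists (a + a'), (b + b'), (c + c').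
rewrite !mulrDl; ring.
Qed.
Lemma IM q p : I p -> I (q * p).
Proof.
case=> [a [b [c ->]]]; exists (q * a), (q * b), (q * c); ring.
Qed.
Lemma IZ c p : I p -> I (c *: p).
Proof. have -> : c *: p = c%:MP * p by rewrite mul_mpolyC. by apply: IM. Qed.
Lemma IN p : I p -> I (- p).
Proof. by move=> h; rewrite -scaleN1r; apply: IZ. Qed.
Lemma IB p q : I p -> I q -> I (p - q).
Proof. by move=> hp hq; apply: ID => //; apply: IN. Qed.
Lemma Ig1 h : I (h * g.1.1). Proof. by exists h, 0, 0; rewrite !mul0r !addr0. Qed.
Lemma Ig2 h : I (h * g.1.2). Proof. by exists 0, h, 0; rewrite !mul0r add0r addr0. Qed.
Lemma Ig3 h : I (h * g.2). Proof. by exists 0, 0, h; rewrite !mul0r !add0r. Qed.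
Lemma Isum (J : Type) (r : seq J) (Q : pred J) (F : J -> R) :
  (forall x, Q x -> I (F x)) -> I (\sum_(x <- r | Q x) F x).
Proof. by move=> h; elim/big_ind: _ => //; [exact: I0 | exact: ID]. Qed.
Lemma Icong a a' b b' : I (a - a') -> I (b - b') -> I (a * b - a' * b').
Proof.
move=> h1 h2; have -> : a * b - a' * b' = a * (b - b') + b' * (a - a') by ring.
by apply: ID; apply: IM.
Qed.
End Ideal.

Definition rho (al be : K) := if be != 0 then be else al.

Lemma rho_neq0 al be : (al != 0) || (be != 0) -> rho al be != 0.
Proof. by rewrite /rho; case: ifP => // _; rewrite orbF. Qed.

Lemma pair_cong (u v : R) (al be : K) e1 e2 : (al != 0) || (be != 0) ->
  exists h, (rho al be)^+(e1+e2) *: (u^+e1 * v^+e2) -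
     (al^+e1 * be^+e2) *: (if be != 0 then v else u)^+(e1+e2) = h * (be *: u - al *: v).
Proof.
rewrite /rho; case: ifPn => hb hab.
  have [h e] := pair_ring u v al%:MP be%:MP e1 e2.
  by exists h; rewrite !scalE !rmorphM !rmorphXn /= e.
rewrite negbK in hb; rewrite (eqP hb).
have [h e] := pair_ring0 u v al%:MP e1 e2.
by exists h; rewrite !scalE !rmorphM !rmorphXn /= rmorph0 e.
Qed.

End MP.

Section MP2.
Variable K : fieldType.
Notation R := (R6 K).

Definition wsel (be : K) (u v : R) := if be != 0 then v else u.

Definition Cst (P : P111pt K) i j k :=
  rho P.1.1.1 P.1.1.2 ^+ i * rho P.1.2.1 P.1.2.2 ^+ j * rho P.2.1 P.2.2 ^+ k.
Definition Wpol (P : P111pt K) i j k : R :=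
  wsel P.1.1.2 (vx0 K) (vx1 K) ^+ i * wsel P.1.2.2 (vy0 K) (vy1 K) ^+ j *
  wsel P.2.2 (vz0 K) (vz1 K) ^+ k.

Lemma mono_cong (P : P111pt K) (hv : pt_valid P) (m : 'X_{1..6}) i j k :
  tdeg m = (i,j,k) ->
  in_IP P (Cst P i j k *: 'X_[m] - (('X_[m] : R).@[cv P]) *: Wpol P i j k).
Proof.
rewrite /tdeg => -[<- <- <-].
case: P hv => [[a b] c] /and3P [ha hb hc].
have [hx ex] := pair_cong (vx0 K) (vx1 K) (m (inord 0)) (m (inord 1)) ha.
have [hy ey] := pair_cong (vy0 K) (vy1 K) (m (inord 2)) (m (inord 3)) hb.
have [hz ez] := pair_cong (vz0 K) (vz1 K) (m (inord 4)) (m (inord 5)) hc.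
set Ax := (X in X = hx * _) in ex.
set Ay := (X in X = hy * _) in ey.
set Az := (X in X = hz * _) in ez.
have Ix : in_IP ((a, b), c) Ax by rewrite /in_IP ex; apply: Ig1.
have Iy : in_IP ((a, b), c) Ay by rewrite /in_IP ey; apply: Ig2.
have Iz : in_IP ((a, b), c) Az by rewrite /in_IP ez; apply: Ig3.
have := Icong (Icong Ix Iy) Iz.
rewrite /Ax /Ay /Az.
set T1 := (X in in_ideal3 _ X -> _).
set T2 := (X in _ -> in_IP _ X).
suff -> : T2 = T1 by [].
rewrite /T1 /T2 /Cst /Wpol meval6 X6 /wsel /=.
rewrite !scalE !rmorphM !rmorphXn /=.
ring.
Qed.


Lemma van_ideal (P : P111pt K) (hv : pt_valid P) i j k p :
  Rdeg i j k p -> p.@[cv P] = 0 -> in_IP P p.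
Proof.
move=> hR h0.
have hC : Cst P i j k != 0.
  move: hv; rewrite /Cst /pt_valid => /and3P [ha hb hc].
  by rewrite !mulf_neq0 // expf_neq0 // rho_neq0.
have e : Cst P i j k *: p - p.@[cv P] *: Wpol P i j k =
   \sum_(m <- msupp p | m \in msupp p) p@_m *: (Cst P i j k *: 'X_[m] - (('X_[m] : R).@[cv P]) *: Wpol P i j k).
  rewrite -big_seq.
  have ev : p.@[cv P] = \sum_(m <- msupp p) p@_m * ('X_[m] : R).@[cv P].
    rewrite {1}[p]mpolyE raddf_sum /=; apply: eq_bigr => m _.
    by rewrite mevalZ.
  rewrite ev {1}[p]mpolyE scaler_sumr scaler_suml -sumrB; apply: eq_bigr => m _.
  by rewrite scalerBr !scalerA mulrC.
have : in_IP P (Cst P i j k *: p - p.@[cv P] *: Wpol P i j k).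
  rewrite e; apply: Isum => m hm; apply: IZ; apply: mono_cong => //.
  by apply/eqP; move/allP: hR; apply.
rewrite h0 scale0r subr0 => /(IZ (Cst P i j k)^-1).
by rewrite scalerA mulVf // scale1r.
Qed.

End MP2.


Section Basis.
Variable K : fieldType.
Notation R := (R6 K).
Variables i j k : nat.

Definition msl : seq 'X_{1..6} :=
  map (@bmnm 6 (i+j+k).+1) (filter (fun m : 'X_{1..6 < (i+j+k).+1} => tdeg (bmnm m) == (i,j,k))
     (enum {: 'X_{1..6 < (i+j+k).+1}})).

Lemma msl_uniq : uniq msl.
Proof.
rewrite map_inj_uniq; first by rewrite filter_uniq // enum_uniq.
exact: val_inj.
Qed.

Lemma sum6 (F : 'I_6 -> nat) :
  (\sum_(i < 6) F i = F (inord 0) + F (inord 1) + F (inord 2) + F (inord 3) + F (inord 4) + F (inord 5))%N.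
Proof.
rewrite !big_ord_recr big_ord0 /= add0n.
by congr (_ + _ + _ + _ + _ + _)%N; congr F; apply/val_inj; rewrite /= inordK.
Qed.

Lemma mem_msl m : (m \in msl) = (tdeg m == (i,j,k)).
Proof.
apply/idP/idP.
  by case/mapP => m' ; rewrite mem_filter => /andP [h _] ->.
move=> h.
have hd : (mdeg m < (i+j+k).+1)%N.
  move: h; rewrite mdegE sum6 /tdeg => /eqP [<- <- <-].
  by rewrite ltnS !addnA.
apply/mapP; exists (BMultinom hd) => //.
by rewrite mem_filter /= h mem_enum.
Qed.

Definition vsR : (size msl).-tuple R := map_tuple (fun m => 'X_[m]) (in_tuple msl).

Lemma tnth_vsR a : tnth vsR a = 'X_[tnth (in_tuple msl) a].
Proof. by rewrite tnth_map. Qed.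

Lemma Rdeg_coef p : Rdeg (K:=K) i j k p <-> forall m, tdeg m != (i,j,k) -> p@_m = 0.
Proof.
split.
  move=> /allP h m hm; apply/eqP; rewrite -[_ == 0]negbK -mcoeff_msupp.
  by apply/negP => /h /= /eqP e; rewrite e eqxx in hm.
move=> h; apply/allP => m; rewrite mcoeff_msupp => hm /=.
by apply/negPn/negP => /h /eqP; rewrite (negbTE hm).
Qed.

Lemma coef_comb c m : (comb vsR c)@_m = \sum_a c a * (tnth (in_tuple msl) a == m)%:R.
Proof.
rewrite /comb raddf_sum /=; apply: eq_bigr => a _.
by rewrite mcoeffZ tnth_vsR mcoeffX.
Qed.

Lemma comb_Rdeg c : Rdeg (K:=K) i j k (comb vsR c).
Proof.
apply/Rdeg_coef => m hm; rewrite coef_comb big1 // => a _.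
have ht : tdeg (tnth (in_tuple msl) a) == (i,j,k) by rewrite -mem_msl mem_tnth.
case: eqP => [e|]; last by rewrite mulr0.
by rewrite -e ht in hm.
Qed.

Lemma tnth_msl_eq a b : (tnth (in_tuple msl) a == tnth (in_tuple msl) b) = (a == b).
Proof.
rewrite !(tnth_nth 0%MM) nth_uniq //= ?msl_uniq //.
Qed.

Lemma basis_R : is_basis (Rdeg (K:=K) i j k) vsR.
Proof.
split.
- move=> a; rewrite tnth_vsR /Rdeg msuppX /= andbT -mem_msl.
  exact: mem_tnth.
- move=> c hc b.
  have := congr1 (mcoeff (tnth (in_tuple msl) b)) hc.
  rewrite -/(comb vsR c) coef_comb mcoeff0 (bigD1 b) //= eqxx mulr1 big1 ?addr0 //.
  by move=> a hab; rewrite tnth_msl_eq (negbTE hab) mulr0.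
- move=> p hp; exists (fun a => p@_(tnth (in_tuple msl) a)).
  apply/mpolyP => m; rewrite -/(comb vsR _) coef_comb.
  case: (boolP (tdeg m == (i,j,k))) => hm; last first.
    rewrite (proj1 (Rdeg_coef p) hp m hm) big1 // => a _.
    case: eqP => [e|]; last by rewrite mulr0.
    by move: (mem_tnth a (in_tuple msl)); rewrite e mem_msl (negbTE hm).
  have hin : m \in msl by rewrite mem_msl.
  have ha : (index m msl < size msl)%N by rewrite index_mem.
  pose a0 := Ordinal ha.
  have e0 : tnth (in_tuple msl) a0 = m by rewrite (tnth_nth 0%MM) /= nth_index.
  rewrite (bigD1 a0) //= e0 eqxx mulr1 big1 ?addr0 // => a hab.
  by rewrite -e0 tnth_msl_eq (negbTE hab) mulr0.
Qed.

End Basis.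


Section Forms.
Variable K : fieldType.

Definition realz (d : nat) (F : K -> K -> K) :=
  exists w : nat -> K, forall x y, F x y = \sum_(g < d.+1) w g * x ^+ g * y ^+ (d - g).

Lemma realz_ext d F G : (forall x y, F x y = G x y) -> realz d F -> realz d G.
Proof. by move=> e [w hw]; exists w => x y; rewrite -e hw. Qed.

Lemma realz_one : realz 0 (fun _ _ => 1).
Proof. by exists (fun _ => 1) => x y; rewrite big_ord_recl big_ord0 !expr0 !mulr1 addr0. Qed.

Lemma realz_mul d F (al be : K) : realz d F ->
  realz d.+1 (fun x y => (al * x + be * y) * F x y).
Proof.
case=> w hw.
exists (fun g => al * (if g is g'.+1 then w g' else 0) + be * (if (g <= d)%N then w g else 0)).
move=> x y; rewrite hw.
have E1 : \sum_(g < d.+2) al * (if val g is g'.+1 then w g' else 0) * x ^+ g * y ^+ (d.+1 - g) =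
   al * x * \sum_(g < d.+1) w g * x ^+ g * y ^+ (d - g).
  rewrite big_ord_recl /= mulr0 !mul0r add0r mulr_sumr; apply: eq_bigr => g _.
  rewrite /bump /= add1n subSS exprS; ring.
have E2 : \sum_(g < d.+2) be * (if (val g <= d)%N then w g else 0) * x ^+ g * y ^+ (d.+1 - g) =
   be * y * \sum_(g < d.+1) w g * x ^+ g * y ^+ (d - g).
  rewrite big_ord_recr /= ltnn mulr0 !mul0r addr0 mulr_sumr; apply: eq_bigr => g _.
  have hg : (g <= d)%N by rewrite -ltnS.
  rewrite hg subSn // exprS; ring.
rewrite mulrDl -E1 -E2 -big_split; apply: eq_bigr => g _ /=; ring.
Qed.

Lemma realz_prod (I : Type) (r : seq I) (P : pred I) (al be : I -> K) :
  realz (count P r) (fun x y => \prod_(u <- r | P u) (al u * x + be u * y)).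
Proof.
elim: r => [|u r IH] /=.
  by apply: realz_ext realz_one => x y; rewrite big_nil.
case: (boolP (P u)) => hu /=.
  apply: realz_ext (realz_mul (al u) (be u) IH) => x y.
  by rewrite big_cons hu.
by apply: realz_ext IH => x y; rewrite big_cons (negbTE hu).
Qed.

Lemma realz_pow d F (al be : K) e : realz d F ->
  realz (e + d) (fun x y => (al * x + be * y) ^+ e * F x y).
Proof.
move=> h; elim: e => [|e IH].
  by apply: realz_ext h => x y; rewrite expr0 mul1r.
apply: realz_ext (realz_mul al be IH) => x y.
by rewrite exprS mulrA.
Qed.

End Forms.

Section RankB.
Variables (K : fieldType) (k s : nat) (c : 'I_s -> K * K) (D : 'I_s -> K).
Hypothesis hD : forall u, D u != 0.
Hypothesis hc : forall u, ((c u).1 != 0) || ((c u).2 != 0).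
Hypothesis hdist : forall u t, u != t -> (c u).2 * (c t).1 - (c u).1 * (c t).2 != 0.

Definition Bm : 'M[K]_(k.+1, s) := \matrix_(g < k.+1, u < s) (D u * (c u).1 ^+ g * (c u).2 ^+ (k - g)).

Lemma rank_Bm : \rank Bm = minn k.+1 s.
Proof.
apply/eqP; rewrite eqn_leq leq_min rank_leq_row rank_leq_col /=.
set r := minn k.+1 s.
have hrs : (r <= s)%N := geq_minr _ _.
have hrk : (r <= k.+1)%N := geq_minl _ _.
pose cw (t : 'I_r) : 'I_s := widen_ord hrs t.
pose lt1 (t : 'I_r) : K := if (c (cw t)).1 != 0 then 1 else 0.
pose lt2 (t : 'I_r) : K := if (c (cw t)).1 != 0 then 0 else 1.
pose dt (t : 'I_r) := count (fun u => u != t) (index_enum 'I_r).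
pose F (t : 'I_r) (x y : K) := (lt1 t * x + lt2 t * y) ^+ (k - dt t) *
   \prod_(u <- index_enum 'I_r | u != t) ((c (cw u)).2 * x + (- (c (cw u)).1) * y).
have hdt : forall t, (dt t <= k)%N.
  move=> t; rewrite /dt.
  have : (count (fun u => u != t) (index_enum 'I_r) < size (index_enum 'I_r))%N.
    rewrite -[X in (_ < X)%N](count_predC (fun u => u != t)) -addn1 leq_add2l.
    rewrite -has_count; apply/hasP; exists t; first by rewrite mem_index_enum.
    by rewrite /= negbK.
  have -> : size (index_enum 'I_r) = r by rewrite -[index_enum _]enumT -cardT card_ord.
  move=> h; rewrite -ltnS; exact: leq_trans h hrk.
have hF : forall t, realz k (F t).
  move=> t; have := realz_pow (lt1 t) (lt2 t) (k - dt t) (realz_prod (index_enum 'I_r) (fun u => u != t) (fun u => (c (cw u)).2) (fun u => - (c (cw u)).1)).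
  by rewrite subnK // => h; apply: realz_ext h.
have [w hw] : exists w : 'I_r -> nat -> K, forall t x y, F t x y = \sum_(g < k.+1) w t g * x ^+ g * y ^+ (k - g).
  apply: (@fin_all_exists _ (fun _ => nat -> K) (fun t w => forall x y, F t x y = \sum_(g < k.+1) w g * x ^+ g * y ^+ (k - g))).
  exact: hF.
pose Wc : 'M[K]_(r, k.+1) := \matrix_(t < r, g < k.+1) w t g.
pose W := Wc *m Bm.
have hW : forall t u, W t u = D u * F t (c u).1 (c u).2.
  move=> t u; rewrite hw !mxE mulr_sumr; apply: eq_bigr => g _; rewrite !mxE; ring.
have Fz : forall t (u : 'I_r), u != t -> F t (c (cw u)).1 (c (cw u)).2 = 0.
  move=> t u hu; rewrite /F (bigD1 u) ?mem_index_enum //=.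
  have -> : (c (cw u)).2 * (c (cw u)).1 + - (c (cw u)).1 * (c (cw u)).2 = 0 by ring.
  by rewrite mul0r mulr0.
have Fnz : forall t, F t (c (cw t)).1 (c (cw t)).2 != 0.
  move=> t; rewrite /F mulf_neq0 //.
    rewrite expf_neq0 // /lt1 /lt2; case: ifPn => h; first by rewrite mul1r mul0r addr0.
    by rewrite mul0r mul1r add0r; move: (hc (cw t)); rewrite (negbTE h).
  rewrite prodf_seq_neq0; apply/allP => u _; apply/implyP => hu.
  rewrite mulNr; apply: hdist.
  by apply: contra hu => /eqP e; apply/eqP/val_inj; move: e => /(congr1 val).
pose E : 'M[K]_(s, r) := \matrix_(u < s, t < r) (if val u == val t then (W t u)^-1 else 0).
have WE : W *m E = 1%:M.
  apply/matrixP => t t'; rewrite !mxE (bigD1 (cw t')) //= [E (cw t') t']mxE /= eqxx big1 ?addr0.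
    case: (eqVneq t t') => [<-|htt].
      by rewrite divff // hW mulf_neq0.
    by rewrite hW Fz 1?eq_sym // mulr0 mul0r.
  move=> u hu; rewrite [E u t']mxE; case: eqP => e; last by rewrite mulr0.
  by exfalso; move/negP: hu; apply; apply/eqP/val_inj.
have := mxrankM_maxl W E; rewrite WE mxrank1 => h1.
by apply: leq_trans h1 _; apply: mxrankM_maxr.
Qed.
End RankB.


Section Line.
Variable K : fieldType.

Definition lamf (l a : K * K) := if l.1 != 0 then a.2 / l.1 else - a.1 / l.2.

Lemma line_param (l a : K * K) : (l.1 != 0) || (l.2 != 0) -> l.1 * a.1 + l.2 * a.2 = 0 ->
  a.1 = lamf l a * (- l.2) /\ a.2 = lamf l a * l.1.
Proof.
move=> hl e.
have e' : l.1 * a.1 = - (l.2 * a.2) by apply/eqP; rewrite -addr_eq0 e.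
rewrite /lamf; case: ifPn => h1.
  split; last by field.
  apply: (mulfI h1); rewrite e'; field; exact: h1.
rewrite negbK in h1; rewrite (eqP h1) in hl e' *; rewrite eqxx /= in hl.
have ha2 : a.2 = 0.
  by move: e'; rewrite mul0r => /eqP; rewrite eq_sym oppr_eq0 mulf_eq0 (negbTE hl) => /eqP.
split; last by rewrite ha2 mulr0.
field; exact: hl.
Qed.

Lemma lamf_neq0 (l a : K * K) : (l.1 != 0) || (l.2 != 0) -> l.1 * a.1 + l.2 * a.2 = 0 ->
  P1_valid a -> lamf l a != 0.
Proof.
move=> hl e; have [e1 e2] := line_param hl e.
rewrite /P1_valid e1 e2; apply: contraTneq => ->.
by rewrite !mul0r eqxx.
Qed.

Lemma dist_nth (X : seq (P111pt K)) P0 u t : pts_distinct X -> (u < t)%N -> (t < size X)%N ->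
  ~~ pt_eq (nth P0 X u) (nth P0 X t).
Proof.
elim: X u t => [|P X IH] u t //= /andP [hall hd] hut ht.
case: u hut => [|u] hut; case: t hut ht => [|t] //= hut ht.
  by move/allP: hall; apply; apply: mem_nth.
by apply: IH.
Qed.

End Line.


Section Main.
Variables (K : fieldType) (l m : K * K).
Hypotheses (hl : (l.1 != 0) || (l.2 != 0)) (hm : (m.1 != 0) || (m.2 != 0)).
Variables (X : seq (P111pt K)) (s : nat).
Hypotheses (hvalid : all (@pt_valid K) X) (hdist : pts_distinct X)
  (honL : all (on_line110 l m) X) (hs : size X = s).
Variables (i j k : nat).

Definition P0 : P111pt K := ((0,0),(0,0),(0,0)).
Definition Pt (t : nat) := nth P0 X t.

Definition fev (p : R6 K) : 'rV[K]_s := \row_(t < s) p.@[cv (Pt t)].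

Lemma fev0 : fev 0 = 0.
Proof. by apply/rowP => t; rewrite !mxE meval0. Qed.

Lemma fevlin a u v : fev (a *: u + v) = a *: fev u + fev v.
Proof. by apply/rowP => t; rewrite !mxE mevalD mevalZ. Qed.

Lemma Pt_valid (t : nat) : (t < s)%N -> pt_valid (Pt t).
Proof. by move=> h; move/allP: hvalid; apply; apply: mem_nth; rewrite hs. Qed.

Lemma Pt_on (t : nat) : (t < s)%N -> on_line110 l m (Pt t).
Proof. by move=> h; move/allP: honL; apply; apply: mem_nth; rewrite hs. Qed.

Lemma hT v : IXdeg X i j k v <-> Rdeg (K:=K) i j k v /\ fev v = 0.
Proof.
split.
  case=> hR hI; split => //; apply/rowP => t; rewrite !mxE.
  apply: ideal_van; apply: hI; apply: mem_nth; rewrite hs; exact: ltn_ord.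
case=> hR hf; split => // P hP.
have ht : (index P X < s)%N by rewrite -hs index_mem.
have eP : P = Pt (index P X) by rewrite /Pt nth_index.
rewrite eP; apply: (van_ideal (Pt_valid ht) hR).
by have := congr1 (fun r : 'rV_s => r 0 (Ordinal ht)) hf; rewrite !mxE.
Qed.


Definition lam (t : nat) := lamf l (Pt t).1.1.
Definition mu (t : nat) := lamf m (Pt t).1.2.
Definition cc (u : 'I_s) := (Pt u).2.
Definition DD (u : 'I_s) := lam u ^+ i * mu u ^+ j.
Definition kap (mo : 'X_{1..6}) := (- l.2) ^+ mo (inord 0) * l.1 ^+ mo (inord 1) *
   (- m.2) ^+ mo (inord 2) * m.1 ^+ mo (inord 3).

Lemma coords (t : nat) : (t < s)%N ->
  [/\ (Pt t).1.1.1 = lam t * - l.2, (Pt t).1.1.2 = lam t * l.1,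
      (Pt t).1.2.1 = mu t * - m.2 & (Pt t).1.2.2 = mu t * m.1].
Proof.
move=> /Pt_on /andP [/eqP e1 /eqP e2].
have [a1 a2] := line_param hl e1.
have [b1 b2] := line_param hm e2.
by split.
Qed.

Lemma f_mono mo : tdeg mo = (i,j,k) ->
  fev 'X_[mo] = kap mo *: row (inord (mo (inord 4))) (Bm k cc DD).
Proof.
rewrite /tdeg => -[e1 e2 e3].
have h4 : (mo (inord 4) < k.+1)%N by rewrite ltnS -e3 leq_addr.
apply/rowP => u; rewrite !mxE meval6.
have [a1 a2 b1 b2] := coords (ltn_ord u).
rewrite a1 a2 b1 b2 /cc /DD /kap inordK //.
rewrite -e1 -e2 -e3 addKn !exprD !exprMn.
ring.
Qed.


Definition ex0 := if l.2 != 0 then i else 0%N.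
Definition ey0 := if m.2 != 0 then j else 0%N.
Definition Nm (g : nat) : 'X_{1..6} :=
  [multinom (nth 0%N [:: ex0; (i - ex0)%N; ey0; (j - ey0)%N; g; (k - g)%N] q) | q < 6].

Lemma Nm_tdeg g : (g <= k)%N -> tdeg (Nm g) = (i,j,k).
Proof.
move=> hg; rewrite /tdeg !mnmE !inordK //= !subnKC //.
  by rewrite /ey0; case: ifP.
by rewrite /ex0; case: ifP.
Qed.

Lemma Nm4 g : Nm g (inord 4) = g.
Proof. by rewrite mnmE inordK. Qed.

Lemma kap_Nm g : kap (Nm g) != 0.
Proof.
rewrite /kap !mnmE !inordK //= /ex0 /ey0.
repeat apply: mulf_neq0.
- case: ifPn => h; first by rewrite expf_neq0 // oppr_eq0.
  by rewrite expr0 oner_neq0.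
- case: ifPn => h; first by rewrite subnn expr0 oner_neq0.
  by rewrite subn0 expf_neq0 //; move: hl; rewrite (negbTE h) orbF.
- case: ifPn => h; first by rewrite expf_neq0 // oppr_eq0.
  by rewrite expr0 oner_neq0.
- case: ifPn => h; first by rewrite subnn expr0 oner_neq0.
  by rewrite subn0 expf_neq0 //; move: hm; rewrite (negbTE h) orbF.
Qed.

Lemma rank_fM : \rank (fM fev (vsR K i j k)) = \rank (Bm k cc DD).
Proof.
apply/eqP; rewrite eqn_leq; apply/andP; split; apply: mxrankS; apply/row_subP => a.
  rewrite rowK tnth_vsR f_mono; first by apply: scalemx_sub; apply: row_sub.
  by apply/eqP; rewrite -mem_msl mem_tnth.
have ha : (a <= k)%N by rewrite -ltnS.
have e := f_mono (Nm_tdeg ha).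
rewrite Nm4 inord_val in e.
have -> : row a (Bm k cc DD) = (kap (Nm a))^-1 *: fev 'X_[Nm a].
  by rewrite e scalerA mulVf ?kap_Nm // scale1r.
apply: scalemx_sub; apply: (f_sub fev0 fevlin (basis_R K i j k)).
by rewrite /Rdeg msuppX /= andbT Nm_tdeg.
Qed.

Lemma cc_dist (u t : 'I_s) : u != t -> (cc u).2 * (cc t).1 - (cc u).1 * (cc t).2 != 0.
Proof.
have key : forall u t : nat, (u < t)%N -> (t < s)%N -> ~~ P1_eq (Pt u).2 (Pt t).2.
  move=> u' t' hut hts.
  have := dist_nth P0 hdist hut (eq_ind_r (fun z => (t' < z)%N) hts hs).
  have hus : (u' < s)%N by apply: ltn_trans hut hts.
  have [a1 a2 b1 b2] := coords hus.
  have [a1' a2' b1' b2'] := coords hts.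
  rewrite /pt_eq /P1_eq a1 a2 b1 b2 a1' a2' b1' b2'.
  have -> : lam u' * - l.2 * (lam t' * l.1) == lam u' * l.1 * (lam t' * - l.2).
    by apply/eqP; ring.
  have -> : mu u' * - m.2 * (mu t' * m.1) == mu u' * m.1 * (mu t' * - m.2).
    by apply/eqP; ring.
  by [].
move=> hne; rewrite subr_eq0 /cc.
case: (ltngtP u t) => h.
- by have := key _ _ h (ltn_ord t); rewrite /P1_eq eq_sym.
- by have := key _ _ h (ltn_ord u); rewrite /P1_eq [_ * (Pt t).2.2]mulrC [_ * (Pt t).2.1]mulrC.
- by move: hne; rewrite (val_inj h) eqxx.
Qed.

Lemma HX_main : HX X i j k = minn k.+1 s.
Proof.
rewrite /HX (dimK_eq (ex_intro _ _ (basis_R K i j k))).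
rewrite (dimK_eq (ker_dim fev0 fevlin (basis_R K i j k) (@comb_Rdeg K i j k) hT)).
rewrite subKn ?rank_leq_row // rank_fM rank_Bm //.
- move=> u; have [hx hy _] := and3P (Pt_valid (ltn_ord u)).
  have [/eqP e1 /eqP e2] := andP (Pt_on (ltn_ord u)).
  by rewrite /DD mulf_neq0 // expf_neq0 //; apply: lamf_neq0.
- by move=> u; have [_ _ hv] := and3P (Pt_valid (ltn_ord u)).
- exact: cc_dist.
Qed.

End Main.

Unset Implicit Arguments.

Theorem lemma2p6 (K : closedFieldType) (hchar : [pchar K] =i pred0)
  (l m : K * K) (hl : (l.1 != 0) || (l.2 != 0)) (hm : (m.1 != 0) || (m.2 != 0))
  (X : seq (P111pt K)) (s : nat)
  (hvalid : all (@pt_valid K) X) (hdist : pts_distinct X)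
  (honL : all (on_line110 l m) X) (hs : size X = s) :
  forall i j k : nat, HX X i j k = minn k.+1 s.
Proof.
move=> i j k; exact: (HX_main hl hm hvalid hdist honL hs).
Qed.
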